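(* Let $f\in C^2(r_{\mathcal{C}},\infty)$ with $f(r)>0$ for all $r>r_{\mathcal{C}}$, and let $X=f(r)\partial_r$. Then for every (sufficiently regular) function $\psi$ on the expanding region of Schwarzschild–de Sitter, $$\square_g(X\psi)=X(\square_g\psi)+\frac{f^2}{r^2}\partial_r\Big(\frac{r^2\phi^{-2}}{f^2}\Big)\partial_r(X\psi)+\frac{f^2}{r^2}\partial_r^2\Big(\frac{r^2\phi^{-2}}{f}\Big)\partial_r\psi+2f\phi^4\Big(\frac1r-\frac{3m}{r^2}\Big)\partial_t^2\psi+\frac{2f}{r}\square_g\psi.$$
   Context: Fix $\Lambda>0$, $0<3m<1/\sqrt\Lambda$; $D(r)=\frac{\Lambda}{3}r^2-1+\frac{2m}{r}$, $r_{\mathcal{C}}$ its largest positive root; expanding region $(r_{\mathcal{C}},\infty)_r\times\mathbb{R}_t\times\mathbb{S}^2$ with $g=-D^{-1}dr^2+Ddt^2+r^2\gamma_{\mathbb{S}^2}$, lapse $\phi=D^{-1/2}$, and $\square_g\psi=\phi^2\partial_t^2\psi-r^{-2}\partial_r(r^2\phi^{-2}\partial_r\psi)+r^{-2}\Delta_{\mathbb{S}^2}\psi$. *)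

(* Defs.v *)
From Stdlib Require Import Reals Lra List.
From Coquelicot Require Import Coquelicot.
Open Scope R_scope.

Definition Dsds (Lam m r : R) : R := Lam / 3 * r ^ 2 - 1 + 2 * m / r.

Definition lapse (Lam m r : R) : R := / sqrt (Dsds Lam m r).

(* Functions on the expanding region, in coordinates (r, t, θ, ϕ),
   (θ, ϕ) spherical coordinates on S^2 (chart 0 < θ < π). *)
Definition fn4 := R -> R -> R -> R -> R.

Definition d_r (psi : fn4) : fn4 :=
  fun r t th ph => Derive (fun s => psi s t th ph) r.
Definition d_t (psi : fn4) : fn4 :=
  fun r t th ph => Derive (fun s => psi r s th ph) t.
Definition d_th (psi : fn4) : fn4 :=
  fun r t th ph => Derive (fun s => psi r t s ph) th.
Definition d_ph (psi : fn4) : fn4 :=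
  fun r t th ph => Derive (fun s => psi r t th s) ph.

Definition lap_S2 (psi : fn4) : fn4 :=
  fun r t th ph =>
    / sin th * Derive (fun u => sin u * d_th psi r t u ph) th
    + / (sin th) ^ 2 * d_ph (d_ph psi) r t th ph.

Definition box_g (Lam m : R) (psi : fn4) : fn4 :=
  fun r t th ph =>
    (lapse Lam m r) ^ 2 * d_t (d_t psi) r t th ph
    - / r ^ 2 * Derive (fun s => s ^ 2 / (lapse Lam m s) ^ 2 * d_r psi s t th ph) r
    + / r ^ 2 * lap_S2 psi r t th ph.

Definition Xvf (f : R -> R) (psi : fn4) : fn4 :=
  fun r t th ph => f r * d_r psi r t th ph.

Definition pd (i : nat) : fn4 -> fn4 :=
  match i with 0%nat => d_r | 1%nat => d_t | 2%nat => d_th | _ => d_ph end.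
Definition iter_pd (l : list nat) (psi : fn4) : fn4 := fold_right pd psi l.

Definition uncurry4 (g : fn4) : R * R * R * R -> R :=
  fun p => g (fst (fst (fst p))) (snd (fst (fst p))) (snd (fst p)) (snd p).

Definition smooth_on_region (rC : R) (psi : fn4) : Prop :=
  forall (l : list nat) (r t th ph : R), rC < r -> 0 < th < PI ->
    continuous (uncurry4 (iter_pd l psi)) (r, t, th, ph) /\
    ex_derive (fun s => iter_pd l psi s t th ph) r /\
    ex_derive (fun s => iter_pd l psi r s th ph) t /\
    ex_derive (fun s => iter_pd l psi r t s ph) th /\
    ex_derive (fun s => iter_pd l psi r t th s) ph.

Definition C2_on (rC : R) (f : R -> R) : Prop :=
  forall r, rC < r ->
    ex_derive f r /\ ex_derive (Derive f) r /\ continuous (Derive_n f 2) r.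

(* Main.v *)
Require Import Defs.
From Stdlib Require Import Reals Lra List.
From Coquelicot Require Import Coquelicot.
Open Scope R_scope.

Lemma emb1 th ph r t : filterlim (fun z : R*R => (fst z, snd z, th, ph)) (locally ((r,t):R*R)) (locally ((r,t,th,ph):R*R*R*R)).
Proof. intros P [eps HP]. exists eps. intros [u v] [H1 H2]. apply HP. repeat split; try apply ball_center; assumption. Qed.
Lemma emb2 t ph r th : filterlim (fun z : R*R => (fst z, t, snd z, ph)) (locally ((r,th):R*R)) (locally ((r,t,th,ph):R*R*R*R)).
Proof. intros P [eps HP]. exists eps. intros [u v] [H1 H2]. apply HP. repeat split; try apply ball_center; assumption. Qed.
Lemma emb3 t th r ph : filterlim (fun z : R*R => (fst z, t, th, snd z)) (locally ((r,ph):R*R)) (locally ((r,t,th,ph):R*R*R*R)).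
Proof. intros P [eps HP]. exists eps. intros [u v] [H1 H2]. apply HP. repeat split; try apply ball_center; assumption. Qed.

Lemma smooth_iter rC psi l : smooth_on_region rC psi -> smooth_on_region rC (iter_pd l psi).
Proof.
  intros H l' r t th ph H1 H2. unfold iter_pd. rewrite <- fold_right_app. apply H; auto.
Qed.

Section Comm.
Variable rC : R.
Variable psi : fn4.
Hypothesis Hpsi : smooth_on_region rC psi.

Lemma comm_rt r t th ph : rC < r -> 0 < th < PI ->
  d_r (d_t psi) r t th ph = d_t (d_r psi) r t th ph.
Proof.
  intros Hr Hth.
  apply (Schwarz (fun u v => psi u v th ph) r t).
  - assert (Hd : 0 < r - rC) by lra.
    exists (mkposreal _ Hd). simpl. intros u v Hu Hv.
    assert (rC < u) by (apply Rabs_def2 in Hu; lra).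
    destruct (Hpsi nil u v th ph) as [_ [A [B _]]]; auto.
    destruct (Hpsi (1%nat :: nil) u v th ph) as [_ [C _]]; auto.
    destruct (Hpsi (0%nat :: nil) u v th ph) as [_ [_ [E _]]]; auto.
  - apply continuity_2d_pt_filterlim.
    destruct (Hpsi (0%nat :: 1%nat :: nil) r t th ph) as [C _]; auto.
    exact (filterlim_comp _ _ _ _ _ _ _ _ (emb1 th ph r t) C).
  - apply continuity_2d_pt_filterlim.
    destruct (Hpsi (1%nat :: 0%nat :: nil) r t th ph) as [C _]; auto.
    exact (filterlim_comp _ _ _ _ _ _ _ _ (emb1 th ph r t) C).
Qed.

Lemma comm_rth r t th ph : rC < r -> 0 < th < PI ->
  d_r (d_th psi) r t th ph = d_th (d_r psi) r t th ph.
Proof.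
  intros Hr Hth.
  apply (Schwarz (fun u v => psi u t v ph) r th).
  - assert (Hd : 0 < Rmin (r - rC) (Rmin th (PI - th))).
    { repeat apply Rmin_glb_lt; lra. }
    exists (mkposreal _ Hd). simpl. intros u v Hu Hv.
    assert (rC < u /\ 0 < v < PI).
    { apply Rabs_def2 in Hu; apply Rabs_def2 in Hv.
      pose proof (Rmin_l (r - rC) (Rmin th (PI - th))).
      pose proof (Rmin_r (r - rC) (Rmin th (PI - th))).
      pose proof (Rmin_l th (PI - th)). pose proof (Rmin_r th (PI - th)). lra. }
    destruct H as [H1 H2].
    destruct (Hpsi nil u t v ph) as [_ [A [_ [B _]]]]; auto.
    destruct (Hpsi (2%nat :: nil) u t v ph) as [_ [C _]]; auto.
    destruct (Hpsi (0%nat :: nil) u t v ph) as [_ [_ [_ [E _]]]]; auto.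
  - apply continuity_2d_pt_filterlim.
    destruct (Hpsi (0%nat :: 2%nat :: nil) r t th ph) as [C _]; auto.
    exact (filterlim_comp _ _ _ _ _ _ _ _ (emb2 t ph r th) C).
  - apply continuity_2d_pt_filterlim.
    destruct (Hpsi (2%nat :: 0%nat :: nil) r t th ph) as [C _]; auto.
    exact (filterlim_comp _ _ _ _ _ _ _ _ (emb2 t ph r th) C).
Qed.

Lemma comm_rph r t th ph : rC < r -> 0 < th < PI ->
  d_r (d_ph psi) r t th ph = d_ph (d_r psi) r t th ph.
Proof.
  intros Hr Hth.
  apply (Schwarz (fun u v => psi u t th v) r ph).
  - assert (Hd : 0 < r - rC) by lra.
    exists (mkposreal _ Hd). simpl. intros u v Hu Hv.
    assert (rC < u) by (apply Rabs_def2 in Hu; lra).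
    destruct (Hpsi nil u t th v) as [_ [A [_ [_ B]]]]; auto.
    destruct (Hpsi (3%nat :: nil) u t th v) as [_ [C _]]; auto.
    destruct (Hpsi (0%nat :: nil) u t th v) as [_ [_ [_ [_ E]]]]; auto.
  - apply continuity_2d_pt_filterlim.
    destruct (Hpsi (0%nat :: 3%nat :: nil) r t th ph) as [C _]; auto.
    exact (filterlim_comp _ _ _ _ _ _ _ _ (emb3 t th r ph) C).
  - apply continuity_2d_pt_filterlim.
    destruct (Hpsi (3%nat :: 0%nat :: nil) r t th ph) as [C _]; auto.
    exact (filterlim_comp _ _ _ _ _ _ _ _ (emb3 t th r ph) C).
Qed.
End Comm.

Lemma D_cont Lam m a : 0 < a -> continuity_pt (Dsds Lam m) a.
Proof.
  intros Ha. apply continuity_pt_filterlim. apply (ex_derive_continuous (Dsds Lam m)).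
  unfold Dsds. auto_derive. lra.
Qed.

Lemma D_pos Lam m rC r : 0 < Lam -> 0 < m -> 0 < rC ->
  (forall r, 0 < r -> Dsds Lam m r = 0 -> r <= rC) -> rC < r -> 0 < Dsds Lam m r.
Proof.
  intros HL Hm HrC Hl Hr.
  destruct (Rtotal_order 0 (Dsds Lam m r)) as [H|[H|H]]; auto.
  - exfalso. assert (r <= rC) by (apply Hl; auto; lra). lra.
  - exfalso. set (R1 := r + 1 + 3 / Lam).
    assert (H3 : Lam * (3 / Lam) = 3) by (field; lra).
    assert (H3p : 0 < 3 / Lam) by (apply Rdiv_lt_0_compat; lra).
    assert (HR1 : 0 < Dsds Lam m R1).
    { unfold Dsds. assert (0 < 2 * m / R1) by (apply Rdiv_lt_0_compat; unfold R1; lra).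
      assert (Lam * R1 > 3) by (unfold R1; nra).
      assert (Lam * R1 * R1 > 3) by (unfold R1 in *; nra).
      assert (Lam / 3 * R1 ^ 2 = Lam * R1 * R1 / 3) by (field).
      lra. }
    destruct (Ranalysis5.IVT_interv (Dsds Lam m) r R1) as [z [Hz1 Hz2]].
    + intros a Ha. apply D_cont. lra.
    + unfold R1; lra.
    + lra.
    + exact HR1.
    + assert (z <= rC) by (apply Hl; auto; lra). lra.
Qed.

Section Main.
Variables (Lam m rC : R) (f : R -> R).
Hypothesis HD : forall s, rC < s -> 0 < Dsds Lam m s.
Hypothesis HrC : 0 < rC.
Hypothesis Hf : C2_on rC f.
Hypothesis Hfpos : forall r, rC < r -> 0 < f r.

Lemma lapse2 s : rC < s -> lapse Lam m s ^ 2 = / Dsds Lam m s.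
Proof.
  intros Hs. pose proof (HD s Hs). unfold lapse. simpl. rewrite Rmult_1_r, <- Rinv_mult, sqrt_sqrt; lra.
Qed.

Lemma a_eq s : rC < s -> s ^ 2 / lapse Lam m s ^ 2 = Lam/3*s^4 - s^2 + 2*m*s.
Proof.
  intros Hs. rewrite lapse2 by auto. pose proof (HD s Hs). assert (Hs0 : s <> 0) by lra.
  unfold Dsds in *. field. split; [lra|].
  assert (E : (Lam * s ^ 2 - 3) * s + 2 * m * 3 = 3 * s * (Lam / 3 * s ^ 2 - 1 + 2 * m / s)) by (field; lra).
  rewrite E. assert (0 < 3 * s * (Lam / 3 * s ^ 2 - 1 + 2 * m / s)) by (apply Rmult_lt_0_compat; lra). lra.
Qed.

Lemma Dpoly_nz s : rC < s -> (Lam * s ^ 2 - 3) * s + 2 * m * 3 <> 0.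
Proof.
  intros Hs. pose proof (HD s Hs). assert (s <> 0) by lra. unfold Dsds in *.
  assert (E : (Lam * s ^ 2 - 3) * s + 2 * m * 3 = 3 * s * (Lam / 3 * s ^ 2 - 1 + 2 * m / s)) by (field; lra).
  rewrite E. assert (0 < 3 * s * (Lam / 3 * s ^ 2 - 1 + 2 * m / s)) by (apply Rmult_lt_0_compat; lra). lra.
Qed.

Lemma loc_gt s : rC < s -> locally s (fun z => rC < z).
Proof. intros Hs. apply (open_gt rC s Hs). Qed.

Lemma Lder_aU (q : fn4) t th ph s : smooth_on_region rC q -> rC < s -> 0 < th < PI ->
  Derive (fun z => z^2/(lapse Lam m z)^2 * d_r q z t th ph) s =
  (4*Lam/3*s^3 - 2*s + 2*m) * d_r q s t th ph + (Lam/3*s^4 - s^2 + 2*m*s) * d_r (d_r q) s t th ph.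
Proof.
  intros Hq Hs Hth.
  rewrite (Derive_ext_loc _ (fun z => (Lam/3*z^4 - z^2 + 2*m*z) * d_r q z t th ph)).
  2: { apply (filter_imp (fun z => rC < z)); [|apply loc_gt; auto].
       intros z Hz. rewrite a_eq; auto. }
  apply is_derive_unique.
  destruct (Hq (0%nat :: nil) s t th ph) as [_ [E _]]; auto.
  auto_derive.
  - exact E.
  - change (Derive (fun x => d_r q x t th ph) s) with (d_r (d_r q) s t th ph). field.
Qed.

Lemma Llap (q : fn4) s t th ph : smooth_on_region rC q -> rC < s -> 0 < th < PI ->
  lap_S2 q s t th ph = / sin th * (cos th * d_th q s t th ph + sin th * d_th (d_th q) s t th ph)
    + / sin th ^ 2 * d_ph (d_ph q) s t th ph.
Proof.
  intros Hq Hs Hth. unfold lap_S2. f_equal. f_equal.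
  apply is_derive_unique.
  destruct (Hq (2%nat :: nil) s t th ph) as [_ [_ [_ [E _]]]]; auto.
  auto_derive.
  - exact E.
  - change (Derive (fun x => d_th q s t x ph) th) with (d_th (d_th q) s t th ph). ring.
Qed.

Lemma Lbox (q : fn4) s t th ph : smooth_on_region rC q -> rC < s -> 0 < th < PI ->
  box_g Lam m q s t th ph =
    / Dsds Lam m s * d_t (d_t q) s t th ph
    - / s ^ 2 * ((4*Lam/3*s^3 - 2*s + 2*m) * d_r q s t th ph + (Lam/3*s^4 - s^2 + 2*m*s) * d_r (d_r q) s t th ph)
    + / s ^ 2 * (/ sin th * (cos th * d_th q s t th ph + sin th * d_th (d_th q) s t th ph)
    + / sin th ^ 2 * d_ph (d_ph q) s t th ph).
Proof.
  intros Hq Hs Hth. unfold box_g. rewrite lapse2, Lder_aU, Llap; auto.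
Qed.

Lemma LdX (q : fn4) s t th ph : smooth_on_region rC q -> rC < s -> 0 < th < PI ->
  d_r (Xvf f q) s t th ph = Derive f s * d_r q s t th ph + f s * d_r (d_r q) s t th ph.
Proof.
  intros Hq Hs Hth. unfold Xvf. unfold d_r at 1.
  apply is_derive_unique.
  destruct (Hq (0%nat :: nil) s t th ph) as [_ [E _]]; auto.
  destruct (Hf s Hs) as [F _].
  auto_derive.
  - split; [exact F | split; [exact E | auto]].
  - change (Derive (fun x => d_r q x t th ph) s) with (d_r (d_r q) s t th ph). change (Derive (fun x => f x) s) with (Derive f s). ring.
Qed.

Ltac fixD f r := try change (Derive (fun x => f x) r) with (Derive f r);
  try change (Derive (fun x => Derive f x) r) with (Derive (Derive f) r); unfold d_r.

Ltac nz := match goal with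
  | |- _ <> 0 => apply Rgt_not_eq; repeat apply Rmult_lt_0_compat; lra
  | _ => idtac end.

Lemma main_id (psi : fn4) (Hpsi : smooth_on_region rC psi) r t th ph :
  rC < r -> 0 < th < PI ->
    box_g Lam m (Xvf f psi) r t th ph =
      Xvf f (box_g Lam m psi) r t th ph
      + (f r) ^ 2 / r ^ 2
          * Derive (fun s => s ^ 2 / (lapse Lam m s) ^ 2 / (f s) ^ 2) r
          * d_r (Xvf f psi) r t th ph
      + (f r) ^ 2 / r ^ 2
          * Derive_n (fun s => s ^ 2 / (lapse Lam m s) ^ 2 / f s) 2 r
          * d_r psi r t th ph
      + 2 * f r * (lapse Lam m r) ^ 4 * (/ r - 3 * m / r ^ 2)
          * d_t (d_t psi) r t th ph
      + 2 * f r / r * box_g Lam m psi r t th ph.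
Proof.
  intros Hr Hth.
  pose proof (HD r Hr) as HDr.
  assert (Hr0 : r <> 0) by lra.
  pose proof (Hfpos r Hr) as Hfr.
  destruct (Hf r Hr) as [Hf1 [Hf2 _]].
  assert (Sr : smooth_on_region rC (d_r psi)) by exact (smooth_iter rC psi (0%nat::nil) Hpsi).
  assert (St : smooth_on_region rC (d_t psi)) by exact (smooth_iter rC psi (1%nat::nil) Hpsi).
  assert (Sth : smooth_on_region rC (d_th psi)) by exact (smooth_iter rC psi (2%nat::nil) Hpsi).
  assert (Sph : smooth_on_region rC (d_ph psi)) by exact (smooth_iter rC psi (3%nat::nil) Hpsi).
  assert (Sin : 0 < sin th) by (apply sin_gt_0; lra).
  assert (Ha : d_t (d_t (Xvf f psi)) r t th ph = f r * d_r (d_t (d_t psi)) r t th ph).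
  { transitivity (f r * d_t (d_t (d_r psi)) r t th ph).
    { unfold d_t, Xvf. rewrite <- Derive_scal. apply Derive_ext. intro s. apply Derive_scal. }
    f_equal.
    transitivity (d_t (d_r (d_t psi)) r t th ph).
    { change (d_t (d_t (d_r psi)) r t th ph) with (Derive (fun s => d_t (d_r psi) r s th ph) t).
      change (d_t (d_r (d_t psi)) r t th ph) with (Derive (fun s => d_r (d_t psi) r s th ph) t).
      apply Derive_ext. intro s. symmetry. apply (comm_rt rC psi); auto. }
    symmetry. apply (comm_rt rC (d_t psi)); auto. }
  assert (Hc : lap_S2 (Xvf f psi) r t th ph =
     f r * (/ sin th * (cos th * d_r (d_th psi) r t th ph + sin th * d_r (d_th (d_th psi)) r t th ph)
    + / sin th ^ 2 * d_r (d_ph (d_ph psi)) r t th ph)).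
  { transitivity (f r * lap_S2 (d_r psi) r t th ph).
    { unfold lap_S2.
      assert (E1 : Derive (fun u => sin u * d_th (Xvf f psi) r t u ph) th
         = f r * Derive (fun u => sin u * d_th (d_r psi) r t u ph) th).
      { rewrite <- Derive_scal. apply Derive_ext. intro u. unfold d_th, Xvf. rewrite Derive_scal. ring. }
      assert (E2 : d_ph (d_ph (Xvf f psi)) r t th ph = f r * d_ph (d_ph (d_r psi)) r t th ph).
      { unfold d_ph, Xvf. rewrite <- Derive_scal. apply Derive_ext. intro s. apply Derive_scal. }
      rewrite E1, E2. ring. }
    assert (C1 : d_th (d_r psi) r t th ph = d_r (d_th psi) r t th ph).
    { symmetry. apply (comm_rth rC psi); auto. }
    assert (C2 : d_th (d_th (d_r psi)) r t th ph = d_r (d_th (d_th psi)) r t th ph).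
    { change (d_th (d_th (d_r psi)) r t th ph) with (Derive (fun u => d_th (d_r psi) r t u ph) th).
      rewrite (Derive_ext_loc _ (fun u => d_r (d_th psi) r t u ph)).
      * symmetry. apply (comm_rth rC (d_th psi)); auto.
      * apply (filter_imp (fun u => 0 < u < PI)).
        { intros u Hu. symmetry. apply (comm_rth rC psi); auto. }
        apply (open_and _ _ (open_gt 0) (open_lt PI)). exact Hth. }
    assert (C3 : d_ph (d_ph (d_r psi)) r t th ph = d_r (d_ph (d_ph psi)) r t th ph).
    { change (d_ph (d_ph (d_r psi)) r t th ph) with (Derive (fun u => d_ph (d_r psi) r t th u) ph).
      rewrite (Derive_ext _ (fun u => d_r (d_ph psi) r t th u)).
      * symmetry. apply (comm_rph rC (d_ph psi)); auto.
      * intro u. symmetry. apply (comm_rph rC psi); auto. }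
    rewrite (Llap (d_r psi)), C1, C2, C3; auto. }
  assert (Hloc : locally r (fun z => rC < z)) by (apply loc_gt; auto).
  destruct (Hpsi (0%nat :: nil) r t th ph) as [_ [EU1 _]]; auto.
  destruct (Hpsi (0%nat :: 0%nat :: nil) r t th ph) as [_ [EU2 _]]; auto.
  assert (Hb : Derive (fun s => s ^ 2 / (lapse Lam m s) ^ 2 * d_r (Xvf f psi) s t th ph) r =
     (4*Lam/3*r^3 - 2*r + 2*m) * (Derive f r * d_r psi r t th ph + f r * d_r (d_r psi) r t th ph)
     + (Lam/3*r^4 - r^2 + 2*m*r) * (Derive (Derive f) r * d_r psi r t th ph
          + 2 * Derive f r * d_r (d_r psi) r t th ph + f r * d_r (d_r (d_r psi)) r t th ph)).
  { rewrite (Derive_ext_loc _ (fun s => (Lam/3*s^4 - s^2 + 2*m*s) *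
        (Derive f s * d_r psi s t th ph + f s * d_r (d_r psi) s t th ph))).
    2: { apply (filter_imp (fun z => rC < z)); [|exact Hloc].
         intros z Hz. rewrite a_eq, LdX; auto. }
    apply is_derive_unique. auto_derive.
    - repeat split; auto.
    - fixD f r. field. }
  destruct (Hpsi (1%nat :: 1%nat :: nil) r t th ph) as [_ [EW _]]; auto.
  destruct (Hpsi (2%nat :: nil) r t th ph) as [_ [ET1 _]]; auto.
  destruct (Hpsi (2%nat :: 2%nat :: nil) r t th ph) as [_ [ET2 _]]; auto.
  destruct (Hpsi (3%nat :: 3%nat :: nil) r t th ph) as [_ [EP2 _]]; auto.
  assert (Hd : Derive (fun s => box_g Lam m psi s t th ph) r =
     - (2*Lam/3*r - 2*m/r^2) / (Dsds Lam m r)^2 * d_t (d_t psi) r t th ph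
     + / Dsds Lam m r * d_r (d_t (d_t psi)) r t th ph
     + 2 / r^3 * ((4*Lam/3*r^3 - 2*r + 2*m) * d_r psi r t th ph + (Lam/3*r^4 - r^2 + 2*m*r) * d_r (d_r psi) r t th ph)
     - / r^2 * ((4*Lam*r^2 - 2) * d_r psi r t th ph + 2 * (4*Lam/3*r^3 - 2*r + 2*m) * d_r (d_r psi) r t th ph
                + (Lam/3*r^4 - r^2 + 2*m*r) * d_r (d_r (d_r psi)) r t th ph)
     - 2 / r^3 * (/ sin th * (cos th * d_th psi r t th ph + sin th * d_th (d_th psi) r t th ph)
         + / sin th ^ 2 * d_ph (d_ph psi) r t th ph)
     + / r^2 * (/ sin th * (cos th * d_r (d_th psi) r t th ph + sin th * d_r (d_th (d_th psi)) r t th ph)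
         + / sin th ^ 2 * d_r (d_ph (d_ph psi)) r t th ph)).
  { rewrite (Derive_ext_loc _ (fun s =>
    / Dsds Lam m s * d_t (d_t psi) s t th ph
    - / s ^ 2 * ((4*Lam/3*s^3 - 2*s + 2*m) * d_r psi s t th ph + (Lam/3*s^4 - s^2 + 2*m*s) * d_r (d_r psi) s t th ph)
    + / s ^ 2 * (/ sin th * (cos th * d_th psi s t th ph + sin th * d_th (d_th psi) s t th ph)
    + / sin th ^ 2 * d_ph (d_ph psi) s t th ph))).
    2: { apply (filter_imp (fun z => rC < z)); [|exact Hloc].
         intros z Hz. rewrite Lbox; auto. }
    apply is_derive_unique. unfold Dsds in *. auto_derive.
    - repeat split; auto; nz.
    - fixD f r. field. repeat split; try lra. apply Dpoly_nz; auto. }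
  assert (Hff : Derive (fun s => s ^ 2 / (lapse Lam m s) ^ 2 / (f s) ^ 2) r =
     (4*Lam/3*r^3 - 2*r + 2*m) / f r ^ 2 - 2 * (Lam/3*r^4 - r^2 + 2*m*r) * Derive f r / f r ^ 3).
  { rewrite (Derive_ext_loc _ (fun s => (Lam/3*s^4 - s^2 + 2*m*s) / f s ^ 2)).
    2: { apply (filter_imp (fun z => rC < z)); [|exact Hloc].
         intros z Hz. rewrite a_eq; auto. }
    apply is_derive_unique. auto_derive.
    - repeat split; auto; nz.
    - fixD f r. field. lra. }
  assert (Hg : Derive_n (fun s => s ^ 2 / (lapse Lam m s) ^ 2 / f s) 2 r =
     (4*Lam*r^2 - 2) / f r - 2 * (4*Lam/3*r^3 - 2*r + 2*m) * Derive f r / f r ^ 2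
     - (Lam/3*r^4 - r^2 + 2*m*r) * Derive (Derive f) r / f r ^ 2
     + 2 * (Lam/3*r^4 - r^2 + 2*m*r) * (Derive f r) ^ 2 / f r ^ 3).
  { rewrite (Derive_n_ext_loc _ (fun s => (Lam/3*s^4 - s^2 + 2*m*s) / f s)).
    2: { apply (filter_imp (fun z => rC < z)); [|exact Hloc].
         intros z Hz. rewrite a_eq; auto. }
    change (Derive (fun x => Derive (fun s => (Lam/3*s^4 - s^2 + 2*m*s) / f s) x) r = 
     (4*Lam*r^2 - 2) / f r - 2 * (4*Lam/3*r^3 - 2*r + 2*m) * Derive f r / f r ^ 2
     - (Lam/3*r^4 - r^2 + 2*m*r) * Derive (Derive f) r / f r ^ 2
     + 2 * (Lam/3*r^4 - r^2 + 2*m*r) * (Derive f r) ^ 2 / f r ^ 3).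
    rewrite (Derive_ext_loc _ (fun x => ((4*Lam/3*x^3 - 2*x + 2*m) * f x - (Lam/3*x^4 - x^2 + 2*m*x) * Derive f x) / f x ^ 2)).
    2: { apply (filter_imp (fun z => rC < z)); [|exact Hloc].
         intros z Hz. pose proof (Hfpos z Hz). destruct (Hf z Hz) as [Fz _].
         apply is_derive_unique. auto_derive.
         - repeat split; auto; nz.
         - try change (Derive (fun x => f x) z) with (Derive f z). field. lra. }
    apply is_derive_unique. auto_derive.
    - repeat split; auto; nz.
    - fixD f r. field. lra. }
  assert (HL : box_g Lam m (Xvf f psi) r t th ph = lapse Lam m r ^ 2 * d_t (d_t (Xvf f psi)) r t th ph
     - / r^2 * Derive (fun s => s^2 / (lapse Lam m s)^2 * d_r (Xvf f psi) s t th ph) r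
     + / r^2 * lap_S2 (Xvf f psi) r t th ph) by reflexivity.
  assert (HX : Xvf f (box_g Lam m psi) r t th ph = f r * Derive (fun s => box_g Lam m psi s t th ph) r) by reflexivity.
  replace (lapse Lam m r ^ 4) with ((lapse Lam m r ^ 2) ^ 2) by ring.
  rewrite HL, HX, Ha, Hb, Hc, Hd, Hff, Hg.
  rewrite (LdX psi), (Lbox psi), lapse2 by auto.
  unfold Dsds. field. repeat split; try nz. apply Dpoly_nz; auto.
Qed.
End Main.
Theorem lemma4p1 (Lam m rC : R) (f : R -> R) (psi : fn4)
  (HLam : 0 < Lam) (Hm : 0 < 3 * m) (HmL : 3 * m < / sqrt Lam)
  (HrC_pos : 0 < rC) (HrC_root : Dsds Lam m rC = 0)
  (HrC_largest : forall r, 0 < r -> Dsds Lam m r = 0 -> r <= rC)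
  (Hf : C2_on rC f) (Hfpos : forall r, rC < r -> 0 < f r)
  (Hpsi : smooth_on_region rC psi) :
  forall r t th ph, rC < r -> 0 < th < PI ->
    box_g Lam m (Xvf f psi) r t th ph =
      Xvf f (box_g Lam m psi) r t th ph
      + (f r) ^ 2 / r ^ 2
          * Derive (fun s => s ^ 2 / (lapse Lam m s) ^ 2 / (f s) ^ 2) r
          * d_r (Xvf f psi) r t th ph
      + (f r) ^ 2 / r ^ 2
          * Derive_n (fun s => s ^ 2 / (lapse Lam m s) ^ 2 / f s) 2 r
          * d_r psi r t th ph
      + 2 * f r * (lapse Lam m r) ^ 4 * (/ r - 3 * m / r ^ 2)
          * d_t (d_t psi) r t th ph
      + 2 * f r / r * box_g Lam m psi r t th ph.
Proof.
  intros r t th ph Hr Hth.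
  apply (main_id Lam m rC f); auto.
  intros s Hs. apply (D_pos Lam m rC s); auto; lra.
Qed.
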